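(* Let $\Omega,\widetilde\Omega$ be Polish spaces and $\mathcal{P}:\Omega\twoheadrightarrow\mathfrak{P}(\widetilde\Omega)$ a non-empty-valued random set whose graph $\{(\omega,P):P\in\mathcal{P}(\omega)\}$ is analytic. Let $X:\Omega\times\widetilde\Omega\to\mathbb{R}^d$ be Borel-measurable with $\mathrm{supp}_{\mathcal{P}}X(\omega)\neq\emptyset$ for all $\omega\in\Omega$. Fix $\omega\in\Omega$ and let $h:\Omega\times\mathbb{R}^d\to\mathbb{R}$ be upper semi-analytic and such that $h(\omega,\cdot)$ is lower semi-continuous. Then $$\mathrm{ess\,sup}_{\mathcal{P}}\,h(X)(\omega)=\sup_{x\in\mathrm{supp}_{\mathcal{P}}X(\omega)}h(\omega,x),$$ where $h(X)(\omega,\widetilde\omega):=h(\omega,X(\omega,\widetilde\omega))$.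
   Context: $\mathfrak{P}(\widetilde\Omega)$ is the set of Borel probability measures on $\widetilde\Omega$ with the weak topology. A property holds $\mathcal{P}(\omega)$-q.s. if it holds outside a set contained in a Borel set that is null for every $P\in\mathcal{P}(\omega)$. $\mathrm{supp}_{\mathcal{P}}X(\omega):=\bigcap\{F\subset\mathbb{R}^d\text{ closed}:\ P(X(\omega,\cdot)\in F)=1\ \forall P\in\mathcal{P}(\omega)\}$. A function is upper semi-analytic if its strict upper level sets $\{h>c\}$ are analytic. For $Z:\Omega\times\widetilde\Omega\to\mathbb{R}$, $\mathrm{ess\,sup}_{\mathcal{P}}Z(\omega)\in[-\infty,+\infty]$ denotes the quasi-sure essential supremum: the value such that, for all $y\in\mathbb{R}$, $y\ge Z(\omega,\cdot)$ $\mathcal{P}(\omega)$-q.s. if and only if $y\ge \mathrm{ess\,sup}_{\mathcal{P}}Z(\omega)$ (and $\mathrm{ess\,sup}_{\mathcal{P}}Z(\omega)\ge Z(\omega,\cdot)$ $\mathcal{P}(\omega)$-q.s.). *)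

(* Defs.v *)
From HB Require Import structures.
From mathcomp Require Import all_boot all_order all_algebra.
From mathcomp Require Import all_classical all_reals all_analysis.
Set Implicit Arguments. Unset Strict Implicit. Unset Printing Implicit Defensive.
Import Order.TTheory GRing.Theory Num.Theory.
Import numFieldNormedType.Exports.
Local Open Scope classical_set_scope.
Local Open Scope ring_scope.

Definition borel_set (T : topologicalType) (A : set T) : Prop :=
  <<s @open T >> A.

Notation borelType T := (g_sigma_algebraType (@open T)).

Definition polish (R : realType) (T : topologicalType) : Prop :=
  (exists D : set T, countable D /\ closure D = setT) /\
  (exists dist : T -> T -> R,
     (forall x y, 0 <= dist x y) /\
     (forall x y, dist x y = 0 <-> x = y) /\
     (forall x y, dist x y = dist y x) /\
     (forall x y z, dist x z <= dist x y + dist y z) /\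
     (forall A : set T, open A <->
        (forall x, A x -> exists2 e : R, 0 < e & [set y | dist x y < e] `<=` A)) /\
     (forall u : nat -> T,
        (forall e : R, 0 < e -> exists N : nat, forall m n, (N <= m)%N -> (N <= n)%N ->
           dist (u m) (u n) < e) ->
        exists l : T, (fun n => dist (u n) l) @ \oo --> 0)).

(** Convergence in the Baire space N^N (product of discrete topologies). *)
Definition baire_cvg (s : nat -> nat -> nat) (t : nat -> nat) : Prop :=
  forall k, \forall n \near \oo, s n k = t k.

(** Analytic subset of a (Polish) topological space: empty, or the image of
    the Baire space N^N under a continuous map (continuity = sequential
    continuity, since N^N is metrizable). *)
Definition analytic (T : topologicalType) (A : set T) : Prop :=
  A = set0 \/
  exists f : (nat -> nat) -> T,
    (forall s t, baire_cvg s t -> f (s n) @[n --> \oo] --> f t) /\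
    range f = A.

Definition upper_semi_analytic (R : realType) (T : topologicalType)
  (h : T -> R) : Prop :=
  forall c : R, analytic [set x | c < h x].

Definition lsc_fun (R : realType) (T : topologicalType)
  (f : T -> R) : Prop :=
  forall c : R, open [set x | c < f x].

Definition weak_cvg (R : realType) (T : ptopologicalType)
  (Pn : nat -> probability (borelType T) R) (P : probability (borelType T) R) : Prop :=
  forall g : T -> R, continuous g -> (exists C : R, forall x, `|g x| <= C) ->
    (\int[Pn n]_x (g x)%:E)%E @[n --> \oo] --> (\int[P]_x (g x)%:E)%E.

(** The graph of P : Om ->> 𝔓(Ot) is analytic in Om × 𝔓(Ot), where 𝔓(Ot)
    carries the weak topology: it is empty or the continuous image of N^N. *)
Definition analytic_graph (R : realType) (Om : topologicalType) (Ot : ptopologicalType)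
  (Pset : Om -> set (probability (borelType Ot) R)) : Prop :=
  [set wp | Pset wp.1 wp.2] = set0 \/
  exists f : (nat -> nat) -> Om * probability (borelType Ot) R,
    (forall s t, baire_cvg s t ->
        (f (s n)).1 @[n --> \oo] --> (f t).1 /\
        weak_cvg (fun n => (f (s n)).2) (f t).2) /\
    range f = [set wp | Pset wp.1 wp.2].

Definition quasi_sure (R : realType) (T : ptopologicalType)
  (Pw : set (probability (borelType T) R)) (Q : T -> Prop) : Prop :=
  exists N : set (borelType T), measurable N /\
    (forall P, Pw P -> P N = 0%E) /\ (forall w, ~ N w -> Q w).

Definition qs_support (R : realType) (T : ptopologicalType) (d : nat)
  (Pw : set (probability (borelType T) R)) (Xw : T -> 'rV[R]_d) : set 'rV[R]_d :=
  [set x | forall F : set 'rV[R]_d, closed F ->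
     (forall P, Pw P -> P (Xw @^-1` F) = 1%E) -> F x].

Definition qs_ess_sup (R : realType) (T : ptopologicalType)
  (Pw : set (probability (borelType T) R)) (Zw : T -> R) : \bar R :=
  ereal_inf [set y : \bar R | quasi_sure Pw (fun w => ((Zw w)%:E <= y)%E)].

(* Main.v *)
Require Import Defs.
From HB Require Import structures.
From mathcomp Require Import all_boot all_order all_algebra.
From mathcomp Require Import all_classical all_reals all_analysis.
From mathcomp Require Import lra.
Import Order.TTheory GRing.Theory Num.Theory.
Import numFieldNormedType.Exports.
Local Open Scope classical_set_scope.
Local Open Scope ring_scope.
Lemma section_borel (Om Ot : topologicalType) (w : Om) (A : set (Om * Ot)) :
  <<s @open (Om * Ot)%type >> A -> <<s @open Ot >> [set t | A (w, t)].
Proof.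
move=> hA.
pose S := [set B : set (Om * Ot) | <<s @open Ot >> [set t | B (w, t)]].
have : <<s @open (Om * Ot)%type >> `<=` S; last by apply.
apply: smallest_sub.
  split.
  - rewrite /S /=. have -> : [set t : Ot | (@set0 (Om*Ot)) (w, t)] = set0 by [].
    exact: sigma_algebra0.
  - move=> B; rewrite /S /= => hB.
    have -> : [set t | (setT `\` B) (w, t)] = setT `\` [set t | B (w, t)].
      by apply/seteqP; split => t /=.
    exact: sigma_algebraCD.
  - move=> F hF; rewrite /S /=.
    have -> : [set t | (\bigcup_k F k) (w, t)] = \bigcup_k [set t | F k (w, t)].
      by apply/seteqP; split => t /=.
    exact: sigma_algebra_bigcup.
move=> B oB; rewrite /S /=; apply: sub_sigma_algebra.
have : continuous (fun t : Ot => (w, t)).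
  move=> t; apply: cvg_pair => //; exact: cvg_cst.
move/continuousP => /(_ B oB). done.
Qed.

Theorem proposition1 (R : realType) (Om : topologicalType) (Ot : ptopologicalType)
  (d : nat)
  (Pset : Om -> set (probability (borelType Ot) R))
  (X : Om -> Ot -> 'rV[R]_d)
  (h : Om * 'rV[R]_d -> R) (w : Om) :
  polish R Om -> polish R Ot ->
  (forall w', Pset w' !=set0) ->
  analytic_graph Pset ->
  (forall B : set 'rV[R]_d, borel_set B ->
     borel_set [set p : Om * Ot | B (X p.1 p.2)]) ->
  (forall w', qs_support (Pset w') (X w') !=set0) ->
  upper_semi_analytic h ->
  lsc_fun (fun x => h (w, x)) ->
  qs_ess_sup (Pset w) (fun wt => h (w, X w wt)) =
  ereal_sup ((fun x => EFin (h (w, x))) @` qs_support (Pset w) (X w)).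
Proof.
move=> _ _ Pne _ HX _ _ hlsc.
have mX : forall B : set 'rV[R]_d, borel_set B ->
    measurable (X w @^-1` B : set (borelType Ot)).
  move=> B /HX H; exact: (@section_borel Om Ot w _ H).
have mXo : forall U : set 'rV[R]_d, open U ->
    measurable (X w @^-1` U : set (borelType Ot)).
  by move=> U oU; apply: mX; apply: sub_sigma_algebra.
have mXc : forall F : set 'rV[R]_d, closed F ->
    measurable (X w @^-1` F : set (borelType Ot)).
  move=> F cF; rewrite -[F]setCK preimage_setC; apply: (@measurableC _ (borelType Ot)).
  exact: (mXo (~` F) (closed_openC cF)).
apply/eqP; rewrite eq_le; apply/andP; split.
-
  set S := qs_support (Pset w) (X w).
  pose I := ('rV[rat]_d * rat)%type.
  pose B (i : I) : set 'rV[R]_d := ball (map_mx (@ratr R) i.1 : 'rV[R]_d) (@ratr R i.2).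
  pose J (i : I) := forall P, Pset w P -> P (X w @^-1` B i) = 0%E.
  pose F (n : nat) : set (borelType Ot) :=
    match (unpickle n : option I) with
    | Some i => if asbool (J i) then X w @^-1` B i else set0
    | None => set0 end.
  have mF : forall n, measurable (F n).
    move=> n; rewrite /F; case: (unpickle n) => [i|] //.
    by case: (asboolP (J i)) => _ //; apply: mXo; exact: ball_open.
  pose N := \bigcup_n F n.
  have mN : measurable N by exact: bigcupT_measurable.
  have N0 : forall P, Pset w P -> P N = 0%E.
    move=> P PP; apply/eqP; rewrite eq_le measure_ge0 andbT.
    have := @measure_sigma_subadditive _ _ _ P N F mF mN (@subset_refl _ N).
    move/le_trans; apply; rewrite le_eqVlt; apply/orP; left; apply/eqP.
    apply: eseries0 => n _ _; rewrite /F; case: (unpickle n) => [i|]; last exact: measure0.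
    by case: (asboolP (J i)) => [Ji|_]; [exact: Ji|exact: measure0].
  apply: ereal_inf_lbound; exists N; split => //; split => //.
  move=> t Nt; apply: ereal_sup_ubound; exists (X w t) => //.
  move=> G cG fG; apply: contrapT => nG.
  have : nbhs (X w t) (~` G) by apply: open_nbhs_nbhs; split => //; exact: closed_openC.
  move=> /nbhs_ballP [e /= e0 eG].
  have [r] := rat_in_itvoo (divr_gt0 e0 (ltr0n _ 2)).
  rewrite in_itv /= => /andP [r0 re].
  have : forall ij : 'I_1 * 'I_d, exists q : rat,
      ball (ratr q : R) (ratr r) (X w t ij.1 ij.2).
    move=> ij; set x0 := X w t ij.1 ij.2.
    have xr : x0 - ratr r < x0 + ratr r.
      by rewrite ltrBlDr -addrA ltrDl addr_gt0.
    have [q] := rat_in_itvoo xr; rewrite in_itv /= => qi.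
    by exists q; rewrite /ball /= distrC ltr_distlC.
  move=> /choice [f Hf].
  pose q : 'rV[rat]_d := \matrix_(i, j) f (i, j).
  have qb : ball (map_mx (@ratr R) q : 'rV[R]_d) (ratr r) (X w t).
    split => // i j; rewrite !mxE; exact: (Hf (i, j)).
  have BG : B (q, r) `<=` ~` G.
    move=> y /= By; apply: eG; apply: (@le_ball _ _ _ (ratr r + ratr r)).
      have := re; move: (ratr r : R) => rr; lra.
    exact: ball_triangle (ball_sym qb) By.
  have Jq : J (q, r).
    move=> P PP; apply/eqP; rewrite eq_le measure_ge0 andbT.
    have <- : P (~` (X w @^-1` G)) = 0%E.
      by rewrite probability_setC ?fG ?subee //; exact: mXc.
    apply: le_measure; rewrite ?inE //.
    - apply: mXo; exact: ball_open.
    - apply: measurableC; exact: mXc.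
    - by move=> s /BG.
  apply: Nt; exists (pickle (q, r)) => //.
  rewrite /F pickleK; case: (asboolP (J (q, r))) => // _.
-
  apply: ge_ereal_sup => _ [x Sx <-].
  apply: le_ereal_inf_tmp => y [N [mN [N0 HN]]].
  case: y HN => [r| |] HN; last 2 first.
  + by rewrite leey.
  + exfalso; have [P PP] := Pne w.
    have : (P setT <= P N)%E.
      apply: le_measure; rewrite ?inE //; move=> t _; apply: contrapT => /HN; by rewrite leeNy_eq.
    by rewrite probability_setT (N0 _ PP) lee_fin ler10.
  rewrite lee_fin; apply/negP => /negP; rewrite -ltNge => rh.
  pose U := [set z | r < h (w, z)].
  have oU : open U by exact: hlsc.
  have : (~` U) x.
    apply: Sx; first exact: open_closedC.
    move=> P PP.
    have -> : X w @^-1` (~` U) = ~` (X w @^-1` U) by [].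
    rewrite probability_setC; last exact: mXo.
    suff -> : P (X w @^-1` U) = 0 by rewrite sube0.
    apply/eqP; rewrite eq_le measure_ge0 andbT -(N0 _ PP).
    apply: le_measure; rewrite ?inE //; first exact: mXo.
    move=> t /= rt; apply: contrapT => /HN; rewrite lee_fin leNgt.
    by rewrite rt.
  by [].
Qed.
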